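(* Let $G$ and $H$ be finite simple graphs, let $S$ be a minimal dominating set of $H$, and let $D$ be a minimal dominating set of $G$ with $c(D)\neq\emptyset$. Then for every $u\in c(D)$, the set $(\{u\} \times S) \cup \big( (D-\{u\}) \times V(H)\big)$ is a dominating set of the Cartesian product $G \,\square\, H$. If, in addition, $c(D)=\{u\}$, then $(\{u\} \times S) \cup \big( (D-\{u\}) \times V(H)\big)$ is a minimal dominating set of $G \,\square\, H$.
   Context: For $u\in A\subseteq V(G)$, the private neighborhood of $u$ with respect to $A$ is $\mathrm{pn}[u,A]=\{x\in V(G): N[x]\cap A=\{u\}\}$. For a dominating set $D$ of $G$, $c(D)=\{x\in D : \mathrm{pn}[x,D]=\{x\}\}$. The Cartesian product $G\,\square\, H$ has vertex set $V(G)\times V(H)$, with $(g_1,h_1)$ adjacent to $(g_2,h_2)$ iff either ($g_1=g_2$ and $h_1h_2\in E(H)$) or ($h_1=h_2$ and $g_1g_2\in E(G)$). *)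

(* Defs.v *)
From mathcomp Require Import all_boot.
Set Implicit Arguments. Unset Strict Implicit. Unset Printing Implicit Defensive.

Definition simple_graph (T : finType) (e : rel T) : Prop :=
  symmetric e /\ irreflexive e.

Definition cnbhd (T : finType) (e : rel T) (x : T) : {set T} :=
  x |: [set y | e x y].

Definition dominating (T : finType) (e : rel T) (D : {set T}) : Prop :=
  forall x : T, exists2 y, y \in D & y \in cnbhd e x.

Definition minimal_dominating (T : finType) (e : rel T) (D : {set T}) : Prop :=
  dominating e D /\ forall D' : {set T}, D' \proper D -> ~ dominating e D'.

Definition pn (T : finType) (e : rel T) (u : T) (A : {set T}) : {set T} :=
  [set x | cnbhd e x :&: A == [set u]].

Definition cset (T : finType) (e : rel T) (D : {set T}) : {set T} :=
  [set x in D | pn e x D == [set x]].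

Definition cartprod (T U : finType) (eG : rel T) (eH : rel U) : rel (T * U) :=
  fun p q => ((p.1 == q.1) && eH p.2 q.2) || ((p.2 == q.2) && eG p.1 q.1).

Definition prod_set (T U : finType) (u : T) (S : {set U}) (D : {set T}) : {set T * U} :=
  setX [set u] S :|: setX (D :\ u) [set: U].

(* Main.v *)
Require Import Defs.
From mathcomp Require Import all_boot.
From Stdlib Require Import Classical.
Set Implicit Arguments. Unset Strict Implicit. Unset Printing Implicit Defensive.

Lemma cnbhdE (T : finType) (e : rel T) x y : (y \in cnbhd e x) = (y == x) || e x y.
Proof. by rewrite !inE. Qed.

Lemma pnE (T : finType) (e : rel T) u (A : {set T}) x :
  x \in pn e u A -> forall z, z \in A -> z \in cnbhd e x -> z = u.
Proof.
rewrite inE => /eqP H z zA zN.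
by have /setP/(_ z) := H; rewrite in_setI zA zN in_set1 /= => /esym/eqP.
Qed.

Lemma pnU (T : finType) (e : rel T) u (A : {set T}) x :
  x \in pn e u A -> u \in A /\ u \in cnbhd e x.
Proof.
rewrite inE => /eqP H.
by have /setP/(_ u) := H; rewrite in_setI in_set1 eqxx => /andP[-> ->].
Qed.

Lemma pnI (T : finType) (e : rel T) u (A : {set T}) x :
  u \in A -> u \in cnbhd e x ->
  (forall z, z \in A -> z \in cnbhd e x -> z = u) -> x \in pn e u A.
Proof.
move=> uA uN H; rewrite inE; apply/eqP/setP => z; rewrite in_setI in_set1.
apply/idP/idP.
- by case/andP => zN zA; rewrite (H z zA zN).
- by move/eqP->; rewrite uN uA.
Qed.

Lemma not_dom (T : finType) (e : rel T) (P D' : {set T}) p v :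
  D' \subset P -> p \notin D' ->
  (forall q, q \in P -> q \in cnbhd e v -> q = p) -> ~ dominating e D'.
Proof.
move=> sub pD H dom; case: (dom v) => q qD qN.
have E := H q (subsetP sub q qD) qN; subst q.
by rewrite qD in pD.
Qed.

Lemma priv (T : finType) (e : rel T) (A : {set T}) a :
  minimal_dominating e A -> a \in A ->
  exists x, a \in cnbhd e x /\ forall z, z \in A -> z \in cnbhd e x -> z = a.
Proof.
case=> dom min aA.
have nd := min _ (properD1 aA).
apply: NNPP => nex; apply: nd => x.
case: (dom x) => y yA yN.
apply: NNPP => H; apply: nex; exists x; split.
- have ya: y = a.
    apply: NNPP => ya; apply: H; exists y => //.
    by rewrite in_setD1 yA andbT; apply/eqP.
  by rewrite -ya.
- move=> z zA zN; apply: NNPP => za; apply: H; exists z => //.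
  by rewrite in_setD1 zA andbT; apply/eqP.
Qed.

Lemma prod_setE T U u (S : {set U}) (D : {set T}) (p : T * U) :
  (p \in prod_set u S D) = ((p.1 == u) && (p.2 \in S)) || ((p.1 != u) && (p.1 \in D)).
Proof. case: p => a b. by rewrite !inE /= andbT. Qed.

Theorem lemma17 (TG TH : finType) (eG : rel TG) (eH : rel TH)
  (hG : simple_graph eG) (hH : simple_graph eH)
  (S : {set TH}) (D : {set TG})
  (hS : minimal_dominating eH S) (hD : minimal_dominating eG D)
  (hc : cset eG D != set0) :
  (forall u, u \in cset eG D -> dominating (cartprod eG eH) (prod_set u S D)) /\
  (forall u, cset eG D = [set u] ->
     minimal_dominating (cartprod eG eH) (prod_set u S D)).
Proof.
have part1 : forall u, u \in cset eG D -> dominating (cartprod eG eH) (prod_set u S D).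
  move=> u; rewrite inE => /andP[uD /eqP pnu] [g h].
  have upn : u \in pn eG u D by rewrite pnu in_set1.
  have gpn : forall g, g \in pn eG u D -> g = u by move=> g'; rewrite pnu in_set1 => /eqP.
  case gu: (g == u).
  - move/eqP: gu => ->.
    case: hS => domS _; case: (domS h) => s sS sN.
    exists (u, s); first by rewrite prod_setE /= eqxx sS.
    rewrite cnbhdE in sN; case/orP: sN => [/eqP->|hs]; first by rewrite cnbhdE eqxx.
    by rewrite cnbhdE /cartprod /= eqxx hs orbT.
  case gD: (g \in D).
  - exists (g, h); first by rewrite prod_setE /= gu gD orbT.
    by rewrite cnbhdE eqxx.
  have [d [dD dN dgu]] : exists d, [/\ d \in D, d \in cnbhd eG g & d != u].
    case: hD => domD _; case: (domD g) => d dD dN.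
    case du: (d == u); last by exists d; rewrite du.
    apply: NNPP => H.
    have : g \in pn eG u D.
      apply: pnI => //; first by rewrite -(eqP du).
      move=> z zD zN; apply: NNPP => zu; apply: H; exists z; split => //.
      by apply/eqP.
    by move/gpn/eqP; rewrite gu.
  have egd : eG g d.
    move: dN; rewrite cnbhdE; case/orP => // /eqP E; by rewrite -E dD in gD.
  exists (d, h); first by rewrite prod_setE /= dgu dD orbT.
  by rewrite cnbhdE /cartprod /= eqxx egd !orbT.
split => // u hcu.
have ucs : u \in cset eG D by rewrite hcu in_set1.
split; first exact: part1.
have := ucs; rewrite inE => /andP[uD /eqP pnu].
have upn : u \in pn eG u D by rewrite pnu in_set1.
have uonly := pnE upn.
case: hG => _ irrG.
move=> D' /properP [sub [[a b] pP pD']].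
move: pP; rewrite prod_setE /= => /orP [/andP[/eqP au bS] | /andP[au aD]].
- subst a.
  have [h [bN bonly]] := priv hS bS.
  apply: (not_dom sub pD' (v := (u, h))).
  move=> [g h']; rewrite prod_setE cnbhdE /cartprod /= => qP qN.
  case/orP: qP => [/andP[/eqP gu h'S] | /andP[gu gD]].
  + subst g. move: qN; rewrite xpair_eqE eqxx /= (irrG u) andbF orbF => qN.
    have h'N : h' \in cnbhd eH h by rewrite cnbhdE.
    by rewrite (bonly h' h'S h'N).
  + have ug0 : (u == g) = false by rewrite eq_sym; apply/negbTE.
    move: qN; rewrite xpair_eqE (negbTE gu) ug0 /= => /andP[_ ug].
    have : g = u by apply: uonly => //; rewrite cnbhdE ug orbT.
    by move/eqP; rewrite (negbTE gu).
- have [x [aN aonly]] := priv hD aD.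
  have xpn : x \in pn eG a D by apply: pnI.
  have anc : a \notin cset eG D.
    by rewrite hcu in_set1.
  have npn : ~~ (pn eG a D == [set a]) by move: anc; rewrite inE aD.
  have : ~~ (pn eG a D \subset [set a]).
    apply/negP => Hsub; move: npn; rewrite eqEsubset Hsub /= sub1set.
    have := subsetP Hsub x xpn; rewrite in_set1 => /eqP xa.
    by rewrite -{1}xa xpn.
  move/subsetPn => [y ypn]; rewrite in_set1 => ya.
  have yonly := pnE ypn.
  have [_ aNy] := pnU ypn.
  have yD : y \notin D.
    apply/negP => yD; have := yonly y yD; rewrite cnbhdE eqxx => /(_ isT) E.
    by rewrite E eqxx in ya.
  apply: (not_dom sub pD' (v := (y, b))).
  move=> [g h']; rewrite prod_setE cnbhdE /cartprod /= => qP qN.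
  have gD : g \in D.
    by case/orP: qP => [/andP[/eqP -> _] | /andP[_ ->]].
  have yg : (g == y) = false.
    by apply/negbTE; apply/eqP => E; rewrite -E gD in yD.
  have yg' : (y == g) = false by rewrite eq_sym.
  move: qN; rewrite xpair_eqE yg yg' /= => /andP[/eqP <- eyg].
  have : g = a by apply: yonly => //; rewrite cnbhdE eyg orbT.
  by move=> ->.
Qed.
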